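(* Let $\alpha>0$, $R>0$, $B>R$. In the Gaussian white noise model $dX^{(n)}(t)=f(t)dt+n^{-1/2}dW(t)$ on $[0,1]$, let $x_{lk}=\int_0^1\psi_{lk}dX^{(n)}=f_{lk}+n^{-1/2}\varepsilon_{lk}$ with $f_{lk}=\langle f,\psi_{lk}\rangle_2$ and $\varepsilon_{lk}$ i.i.d. $N(0,1)$. Suppose the true $f_0$ satisfies $\sup_{l,k}2^{l(1/2+\alpha)}|f_{0,lk}|\le R$. Let the prior $\Pi$ make the $f_{lk}$ independent with Lebesgue density $\sigma_l^{-1}\varphi(\cdot/\sigma_l)$ on $\mathbb{R}$, where $\varphi=\frac1{2B}\mathbf 1_{[-B,B]}$ and $\sigma_l=2^{-l(1/2+\alpha)}$. Let $L_n=\lfloor\log_2((n/\log n)^{1/(2\alpha+1)})\rfloor$. Then there exists $C>0$ such that for every real $t$, every $n\ge2$, every $0\le l\le L_n$ and every $0\le k\le2^l-1$, $$E_{f_0}^n\,E^\Pi\big[e^{t\sqrt n(f_{lk}-x_{lk})}\mid X^{(n)}\big]\le Ce^{t^2/2}.$$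
   Context: $\{\psi_{lk}\}$ is a (Cohen–Daubechies–Vial boundary-corrected) wavelet orthonormal basis of $L^2[0,1]$ indexed by $l\ge0$, $0\le k\le2^l-1$. $E^\Pi[\cdot\mid X^{(n)}]$ denotes expectation under the posterior distribution and $E^n_{f_0}$ expectation under the model with $f=f_0$. *)

(* Defs.v *)
From HB Require Import structures.
From mathcomp Require Import all_boot all_order all_algebra.
From mathcomp Require Import all_classical all_reals all_analysis.
Set Implicit Arguments. Unset Strict Implicit. Unset Printing Implicit Defensive.
Import Order.TTheory GRing.Theory Num.Theory.
Import numFieldNormedType.Exports.
Local Open Scope classical_set_scope.
Local Open Scope ring_scope.

Definition sigma_l (R : realType) (alpha : R) (l : nat) : R :=
  2 `^ (- (l%:R * (2^-1 + alpha))).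

Definition phiB (R : realType) (B : R) (u : R) : R :=
  if `|u| <= B then (2 * B)^-1 else 0.

Definition prior_dens (R : realType) (alpha B : R) (l : nat) (f : R) : R :=
  (sigma_l alpha l)^-1 * phiB B (f / sigma_l alpha l).

Definition lik (R : realType) (n : nat) (x f : R) : R :=
  Num.sqrt (n%:R / (2 * pi)) * expR (- (n%:R / 2) * (x - f) ^+ 2).

Definition std_normal_pdf (R : realType) (e : R) : R :=
  (Num.sqrt (2 * pi))^-1 * expR (- (e ^+ 2) / 2).

(* Posterior expectation E^Pi[ g(f_{lk}) | X^(n) ] for the product prior in
   the Gaussian sequence model: by independence the posterior of f_{lk}
   depends on the data only through x_{lk}, and is given by Bayes' formula. *)
Definition post_exp (R : realType) (alpha B : R) (n l : nat) (g : R -> R) (x : R)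
  : R :=
  Rintegral (@lebesgue_measure R) setT
      (fun f => g f * prior_dens alpha B l f * lik n x f)
  / Rintegral (@lebesgue_measure R) setT
      (fun f => prior_dens alpha B l f * lik n x f).

Definition L_n (R : realType) (alpha : R) (n : nat) : int :=
  Num.floor (ln ((n%:R / ln n%:R) `^ (1 / (2 * alpha + 1))) / ln 2).

(* Main.v *)
Require Import Defs.
From HB Require Import structures.
From mathcomp Require Import all_boot all_order all_algebra.
From mathcomp Require Import all_classical all_reals all_analysis.
From mathcomp Require Import ring lra measurable_realfun.
Import Order.TTheory GRing.Theory Num.Theory.
Import numFieldNormedType.Exports.
Local Open Scope classical_set_scope.
Local Open Scope ring_scope.

Local Notation mu := (@lebesgue_measure _).


Lemma le_intT {R : realType} (f g : R -> \bar R) : (forall x, 0 <= f x)%E ->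
  (forall x, f x <= g x)%E ->
  (\int[mu]_(x in setT) f x <= \int[mu]_(x in setT) g x)%E.
Proof.
move=> f0 fg.
have g0 : forall x, (0 <= g x)%E by move=> x; exact: le_trans (f0 x) (fg x).
rewrite !ge0_integralTE //.
apply: ereal_sup_le => _ [h hf <-]; exists h => //= x.
exact: le_trans (hf x) (fg x).
Qed.


Lemma mexp {R : realType} (c : R) : measurable_fun setT (fun x : R => expR (- c * x)).
Proof. by apply: measurableT_comp => //; exact: measurable_funM. Qed.

Lemma int_exp0y {R : realType} (c : R) : 0 < c ->
  (\int[mu]_(x in `[0%R, +oo[) (expR (- c * x))%:E = (c^-1)%:E)%E.
Proof.
move=> c0.
have := integral_exponential_pdf c0.
rewrite /exponential_pdf -/(comp EFin _).
move=> H.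
have E : (\int[mu]_(x in `[0%R,+oo[) ((c * expR (- c * x))%:E) =
   c%:E * \int[mu]_(x in `[0%R,+oo[) (expR (- c * x))%:E)%E.
  rewrite -ge0_integralZl_EFin //; first last.
  - exact: ltW.
  - apply/measurable_EFinP; apply: measurable_funTS; exact: mexp.
rewrite -restrict_EFin -integral_mkcond in H.
have H' : (\int[mu]_(x in `[0%R,+oo[) ((c * expR (- c * x))%:E) = 1)%E := H.
rewrite H' in E.
move: E; set I := (\int[mu]_(x in _) _)%E.
move=> E; have cne : c != 0 by rewrite gt_eqF.
by rewrite -[I]mul1e -(mulVf cne) EFinM -muleA -E mule1.
Qed.



Lemma mexpabs {R : realType} (c : R) : measurable_fun setT (fun x : R => expR (- c * `|x|)).
Proof.
apply: measurableT_comp => //; apply: measurable_funM => //.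
Qed.

Lemma cont_expc {R : realType} (c : R) : continuous (fun x : R => expR (c * x)).
Proof.
move=> x; apply: continuous_comp; last exact: continuous_expR.
by apply: continuousM => //; apply: cst_continuous.
Qed.

Lemma int_exp_abs {R : realType} (c : R) : 0 < c ->
  (\int[mu]_(x in setT) (expR (- c * `|x|))%:E = (c^-1 + c^-1)%:E)%E.
Proof.
move=> c0.
have -> : [set: R] = `]-oo, 0%R] `|` `]0%R, +oo[.
  apply/seteqP; split => x //= _; rewrite !in_itv /= andbT.
  by case: (lerP x 0) => _; [left|right].
rewrite ge0_integral_setU //=; first last.
- rewrite disj_set2E; apply/eqP; apply/seteqP; split => // x [] /=.
  rewrite !in_itv /= andbT => h1 h2.
  by move: (lt_le_trans h2 h1); rewrite ltxx.
- by apply/measurable_EFinP; apply: measurable_funTS; exact: mexpabs.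
rewrite EFinD; congr (_ + _)%E.
- transitivity (\int[mu]_(x in `]-oo, 0%R]) (expR (c * x))%:E)%E.
    apply: eq_integral => x; rewrite inE /= in_itv /= => x0.
    by rewrite ler0_norm // mulrN mulNr opprK.
  have -> : `]-oo, 0%R]%classic = `]-oo, (- 0)%R]%classic :> set R by rewrite oppr0.
  rewrite ge0_integration_by_substitutionNy; first last.
  + by move=> x _; exact: expR_ge0.
  + apply: continuous_subspaceT; exact: cont_expc.
  rewrite -(@int_exp0y _ c c0); apply: eq_integral => x _ /=.
  by rewrite mulrN mulNr.
- rewrite integral_itv_obnd_cbnd; last first.
    by apply/measurable_EFinP; apply: measurable_funTS; exact: mexpabs.
  rewrite -(@int_exp0y _ c c0); apply: eq_integral => x; rewrite inE /= in_itv /= andbT => x0.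
  by rewrite ger0_norm.
Qed.



Lemma sigmaE {R : realType} (alpha : R) l : sigma_l alpha l = expR (- (l%:R * (2^-1 + alpha)) * ln 2).
Proof. by rewrite /sigma_l /powR pnatr_eq0. Qed.

Lemma Ln_bound {R : realType} (alpha : R) (n l : nat) : 0 < alpha -> (2 <= n)%N ->
  (l%:Z <= L_n alpha n)%R -> ln 2 <= n%:R * (sigma_l alpha l) ^+ 2.
Proof.
move=> a0 n2 hl0.
have n2R : (2:R) <= n%:R by rewrite ler_nat.
have n1 : (1:R) < n%:R by apply: lt_le_trans n2R; lra.
have lnn : 0 < ln (n%:R : R) by apply: ln_gt0.
have ln2 : 0 < ln (2:R) by apply: ln_gt0; lra.
have n0 : (0:R) < n%:R by lra.
rewrite /L_n floor_ge_int ln_powR in hl0.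
have hl : l%:R * ((2 * alpha + 1) * ln 2) <= ln (n%:R / ln n%:R).
  have h2 : 0 < (2 * alpha + 1) * ln (2:R) by apply: mulr_gt0 => //; lra.
  have := hl0; rewrite -(ler_pM2r h2) => h; apply: le_trans h _.
  rewrite [X in X <= _](_ : _ = ln (n%:R / ln n%:R)) //; field.
  by apply/andP; split; apply: lt0r_neq0 => //; lra.
rewrite ln_div ?posrE // in hl.
apply: (@le_trans _ _ (ln n%:R)).
  by rewrite ler_ln ?posrE //; lra.
have en : expR (ln (n%:R:R)) = n%:R by rewrite lnK ?posrE.
have eln : expR (ln (ln (n%:R:R))) = ln n%:R by rewrite lnK ?posrE.
rewrite sigmaE expr2 -[X in _ * X]expRD -[X in _ <= X * _]en -expRD -[X in X <= _]eln ler_expR.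
set a := - (l%:R * (2^-1 + alpha)) * ln (2:R).
have ha : a + a = - (l%:R * ((2 * alpha + 1) * ln 2)) by rewrite /a; field.
lra.
Qed.


Lemma gl_eq {R : realType} (n : nat) (t x f : R) : (0 < n)%N ->
  expR (t * Num.sqrt n%:R * (f - x)) * lik n x f =
  expR (t ^+ 2 / 2) * normal_pdf (x + t / Num.sqrt n%:R) (Num.sqrt n%:R)^-1 f.
Proof.
move=> n0.
set s := Num.sqrt (n%:R : R).
have s0 : 0 < s by rewrite sqrtr_gt0 ltr0n.
have s2 : s ^+ 2 = n%:R by rewrite sqr_sqrtr // ler0n.
have sn0 : s^-1 != 0 by rewrite invr_eq0 gt_eqF.
rewrite normal_pdfE // /lik.
rewrite /normal_peak /normal_fun.
have pi0 : pi != 0 :> R by rewrite gt_eqF // pi_gt0.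
have hs : Num.sqrt (n%:R / (2 * pi)) = (Num.sqrt (s^-1 ^+ 2 * pi *+ 2))^-1.
  rewrite -sqrtrV; last by rewrite mulrn_wge0 // mulr_ge0 // ?sqr_ge0 // pi_ge0.
  congr Num.sqrt; rewrite -s2; move: (pi : R) pi0 => p p0; field.
  by rewrite p0 gt_eqF.
rewrite hs mulrCA -expRD [RHS]mulrCA -expRD; congr (_ * expR _).
rewrite -s2; field.
by rewrite gt_eqF.
Qed.

Lemma Rint_ub {R : realType} (h : R -> R) (U : R) : (forall x, 0 <= h x) ->
  (\int[mu]_(x in setT) (h x)%:E <= U%:E)%E ->
  0 <= Rintegral mu setT h <= U.
Proof.
move=> h0; rewrite /Rintegral.
have : (0 <= \int[mu]_(x in setT) (h x)%:E)%E.
  by apply: integral_ge0 => x _; rewrite lee_fin.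
case: (\int[mu]_(x in setT) (h x)%:E)%E => [r||] //=.
by rewrite !lee_fin => -> ->.
Qed.

Lemma Rint_lb {R : realType} (h : R -> R) (L : R) : (forall x, 0 <= h x) ->
  (L%:E <= \int[mu]_(x in setT) (h x)%:E)%E ->
  Rintegral mu setT h = 0 \/ L <= Rintegral mu setT h.
Proof.
move=> h0; rewrite /Rintegral.
case: (\int[mu]_(x in setT) (h x)%:E)%E => [r||] //=.
- by rewrite lee_fin => ->; right.
- by left.
Qed.

Lemma int_box {R : realType} (k a b : R) : 0 <= k -> a <= b ->
  (\int[mu]_(x in setT) (k * \1_(`[a, b]%classic) x)%:E = (k * (b - a))%:E)%E.
Proof.
move=> k0 ab.
under eq_integral do rewrite EFinM.
rewrite ge0_integralZl_EFin //.
rewrite integral_indic // setIT.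
  transitivity (k%:E * (@lebesgue_measure R) ([set` `[a, b]] : set R))%E; first by [].
  rewrite lebesgue_measure_itv /= lte_fin; case: ltP => ab'.
  - by rewrite -EFinD -EFinM.
  - have -> : b = a by apply/eqP; rewrite eq_le ab ab'.
    by rewrite subrr !mulr0 mule0.
apply/measurable_EFinP; exact: measurable_indic.
Qed.

Lemma sigma_gt0 {R : realType} (alpha : R) l : 0 < sigma_l alpha l.
Proof. by rewrite sigmaE expR_gt0. Qed.

Lemma p_ge0 {R : realType} (alpha B : R) l f : 0 < B -> 0 <= prior_dens alpha B l f.
Proof.
move=> B0; rewrite /prior_dens /phiB; apply: mulr_ge0.
  by rewrite invr_ge0 ltW // sigma_gt0.
by case: ifP => _ //; rewrite invr_ge0; apply: mulr_ge0 => //; apply: ltW.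
Qed.

Lemma p_le {R : realType} (alpha B : R) l f : 0 < B ->
  prior_dens alpha B l f <= (sigma_l alpha l)^-1 * (2 * B)^-1.
Proof.
move=> B0; rewrite /prior_dens /phiB; apply: ler_wpM2l.
  by rewrite invr_ge0 ltW // sigma_gt0.
by case: ifP => _ //; rewrite invr_ge0; apply: mulr_ge0 => //; apply: ltW.
Qed.

Lemma p_eq {R : realType} (alpha B : R) l f : 0 < B -> `|f| <= B * sigma_l alpha l ->
  prior_dens alpha B l f = (sigma_l alpha l)^-1 * (2 * B)^-1.
Proof.
move=> B0 hf; rewrite /prior_dens /phiB ifT //.
have s0 := sigma_gt0 alpha l.
by rewrite normrM [X in _ * X]gtr0_norm ?invr_gt0 // ler_pdivrMr.
Qed.

Lemma lik_ge0 {R : realType} n (x f : R) : 0 <= lik n x f.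
Proof. by rewrite /lik mulr_ge0 // expR_ge0. Qed.

Lemma post_bound {R : realType} (alpha B t f0 e c0 : R) (n l : nat) :
  0 < B -> (0 < n)%N -> 0 < c0 ->
  `|f0| + c0 / Num.sqrt n%:R <= B * sigma_l alpha l ->
  0 <= std_normal_pdf e * post_exp alpha B n l
        (fun f => expR (t * Num.sqrt n%:R * (f - (f0 + e / Num.sqrt n%:R))))
        (f0 + e / Num.sqrt n%:R)
  <= expR (t ^+ 2 / 2) * (2 / c0 * expR (c0 ^+ 2 / 2)) * expR (- (c0 / 2) * `|e|).
Proof.
move=> B0 n0 c00 hI.
set s := Num.sqrt (n%:R : R).
have s0 : 0 < s by rewrite sqrtr_gt0 ltr0n.
have s2 : s ^+ 2 = n%:R by rewrite sqr_sqrtr // ler0n.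
set x := f0 + e / s.
set sg := sigma_l alpha l.
have sg0 : 0 < sg by exact: sigma_gt0.
set q := Num.sqrt (2 * pi : R).
have pi0 : (0:R) < pi by exact: pi_gt0.
have q0 : 0 < q by rewrite sqrtr_gt0 mulr_gt0.
have hlikc : Num.sqrt (n%:R / (2 * pi)) = s / q.
  rewrite sqrtrM ?ler0n // sqrtrV //; apply: mulr_ge0 => //; exact: ltW.
have phi0 : 0 <= std_normal_pdf e.
  by rewrite /std_normal_pdf mulr_ge0 ?expR_ge0 // invr_ge0 sqrtr_ge0.
rewrite /post_exp.
set N := Rintegral _ _ _.
set D := Rintegral _ _ _.
set Nu := sg^-1 * (2 * B)^-1 * expR (t ^+ 2 / 2).
have /andP[N0 NU] : 0 <= N <= Nu.
  apply: Rint_ub.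
    move=> f; apply: mulr_ge0; last exact: lik_ge0.
    by apply: mulr_ge0; [exact: expR_ge0 | exact: p_ge0].
  apply: le_trans (le_intT _ (fun f => (Nu * normal_pdf (x + t / s) s^-1 f)%:E) _ _) _.
  - move=> f; rewrite lee_fin; apply: mulr_ge0; last exact: lik_ge0.
    by apply: mulr_ge0; [exact: expR_ge0 | exact: p_ge0].
  - move=> f; rewrite lee_fin mulrAC gl_eq // /Nu -mulrA [X in _ <= X]mulrC.
    apply: ler_wpM2l; last exact: p_le.
    by apply: mulr_ge0; [exact: expR_ge0 | exact: normal_pdf_ge0].
  under eq_integral do rewrite EFinM.
  rewrite ge0_integralZl_EFin //.
  all: first [ by apply/measurable_EFinP; exact: measurable_normal_pdf
             | by move=> y _; rewrite lee_fin normal_pdf_ge0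
             | by apply: mulr_ge0; [apply: mulr_ge0; rewrite invr_ge0 ?mulr_ge0 //; apply: ltW | exact: expR_ge0]
             | idtac ].
  rewrite [X in (_ * X)%E](_ : _ = 1%E) ?mule1 //; exact: integral_normal_pdf.
set d := c0 / s.
have d0 : 0 < d by rewrite divr_gt0.
have cd : c0 = s * d by rewrite /d; field; rewrite gt_eqF.
have hI' : `|f0| + d <= B * sg by [].
set E := expR (- (e ^+ 2 - c0 * `|e| + c0 ^+ 2) / 2).
set k := sg^-1 * (2 * B)^-1 * (s / q * E).
have k0 : 0 <= k.
  apply: mulr_ge0; first by apply: mulr_ge0; rewrite invr_ge0 ?mulr_ge0 //; apply: ltW.
  by apply: mulr_ge0; [apply: divr_ge0; apply: ltW | exact: expR_ge0].
set a := if 0 <= e then f0 + d / 2 else f0 - d.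
have hD : D = 0 \/ k * (d / 2) <= D.
  apply: Rint_lb.
    by move=> f; apply: mulr_ge0; [exact: p_ge0 | exact: lik_ge0].
  rewrite (_ : k * (d / 2) = k * ((a + d / 2) - a)); last by congr (_ * _); ring.
  rewrite -int_box //; last by rewrite lerDl; apply: divr_ge0 => //; apply: ltW.
  apply: le_intT => f.
    by rewrite lee_fin; apply: mulr_ge0 => //; rewrite indicE.
  rewrite lee_fin indicE; case: (boolP (f \in `[a, a + d / 2]%classic)) => hf; last first.
    by rewrite mulr0; apply: mulr_ge0; [exact: p_ge0 | exact: lik_ge0].
  rewrite mulr1.
  move: hf; rewrite inE /= in_itv /= => /andP[fa fb].
  set w := f - f0.
  have hw : (0 <= e -> d / 2 <= w <= d) /\ (e < 0 -> - d <= w <= - d / 2).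
    rewrite /w; move: fa fb; rewrite /a; case: (lerP 0 e) => he fa fb;
      split => h; apply/andP; split; lra.
  have fB : `|f| <= B * sg.
    apply: le_trans hI'.
    have -> : f = f0 + w by rewrite /w; ring.
    apply: le_trans (ler_normD _ _) _; rewrite lerD2l.
    case: (lerP 0 e) => he.
    - have /andP[h1 h2] := hw.1 he; rewrite ger0_norm //; lra.
    - have /andP[h1 h2] := hw.2 he; rewrite ler0_norm //; lra.
  rewrite p_eq // /k; apply: ler_wpM2l.
    by apply: mulr_ge0; rewrite invr_ge0 ?mulr_ge0 //; apply: ltW.
  rewrite /lik hlikc; apply: ler_wpM2l; first by apply: divr_ge0; apply: ltW.
  rewrite /E ler_expR.
  have -> : - (n%:R / 2) * (x - f) ^+ 2 = - ((e - s * w) ^+ 2 / 2).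
    by rewrite -s2 /x /w; field; rewrite gt_eqF.
  rewrite cd.
  suff : (e - s * w) ^+ 2 <= e ^+ 2 - s * d * `|e| + (s * d) ^+ 2 by lra.
  case: (lerP 0 e) => he.
  - have /andP[h1 h2] := hw.1 he; rewrite ger0_norm //.
    have H1 : 0 <= e * s * (w - d / 2) by rewrite !mulr_ge0 //; [exact: ltW | lra].
    have H2 : 0 <= s ^+ 2 * ((d - w) * (d + w)) by rewrite !mulr_ge0 ?sqr_ge0 //; lra.
    nra.
  - have /andP[h1 h2] := hw.2 he; rewrite ler0_norm; last exact: ltW.
    have H1 : 0 <= (- e) * s * (- d / 2 - w).
      by rewrite !mulr_ge0 //; [lra | exact: ltW | lra].
    have H2 : 0 <= s ^+ 2 * ((d + w) * (d - w)) by rewrite !mulr_ge0 ?sqr_ge0 //; lra.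
    nra.
have E0 : 0 < E by exact: expR_gt0.
have k0' : 0 < k.
  apply: mulr_gt0; first by apply: mulr_gt0; rewrite invr_gt0 ?mulr_gt0.
  by apply: mulr_gt0 => //; apply: divr_gt0.
have L0 : 0 < k * (d / 2) by apply: mulr_gt0 => //; apply: divr_gt0.
have Rge0 : 0 <= expR (t ^+ 2 / 2) * (2 / c0 * expR (c0 ^+ 2 / 2)) * expR (- (c0 / 2) * `|e|).
  apply: mulr_ge0; last exact: expR_ge0.
  apply: mulr_ge0; first exact: expR_ge0.
  by apply: mulr_ge0; [apply: divr_ge0 => //; apply: ltW | exact: expR_ge0].
case: hD => [D0 | LD].
  by rewrite D0 invr0 !mulr0 lexx Rge0.
have D0 : 0 < D by exact: lt_le_trans L0 LD.
apply/andP; split.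
  by apply: mulr_ge0 => //; apply: divr_ge0 => //; apply: ltW.
apply: (le_trans (ler_wpM2l phi0 (_ : N / D <= Nu / (k * (d / 2))))).
  apply: ler_pM => //; first by rewrite invr_ge0 ltW.
  by rewrite lef_pV2 ?posrE.
rewrite le_eqVlt; apply/orP; left; apply/eqP.
have hE : expR (- (e ^+ 2) / 2) = expR (c0 ^+ 2 / 2) * expR (- (c0 / 2) * `|e|) * E.
  by rewrite /E -!expRD; congr expR; field.
rewrite /std_normal_pdf -/q hE /Nu /k /d.
field.
by rewrite !gt_eqF.
Qed.




Theorem lemma1 (R : realType) (alpha Rb B : R) (f0 : nat -> nat -> R) :
  0 < alpha -> 0 < Rb -> Rb < B ->
  (forall l k : nat, (k < 2 ^ l)%N ->
     2 `^ (l%:R * (2^-1 + alpha)) * `|f0 l k| <= Rb) ->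
  exists C : R, 0 < C /\
    forall (t : R) (n l k : nat), (2 <= n)%N -> (l%:Z <= L_n alpha n)%R ->
      (k < 2 ^ l)%N ->
      (\int[@lebesgue_measure R]_(e in setT)
         (std_normal_pdf e *
          post_exp alpha B n l
            (fun f => expR (t * Num.sqrt n%:R * (f - (f0 l k + e / Num.sqrt n%:R))))
            (f0 l k + e / Num.sqrt n%:R))%:E
       <= (C * expR (t ^+ 2 / 2))%:E)%E.
Proof.
move=> a0 Rb0 RbB hf0.
have ln20 : 0 < ln (2:R) by apply: ln_gt0; lra.
set c0 := (B - Rb) * Num.sqrt (ln (2:R)).
have c00 : 0 < c0 by apply: mulr_gt0; [lra | rewrite sqrtr_gt0].
set K0 := 2 / c0 * expR (c0 ^+ 2 / 2).
have K00 : 0 < K0 by apply: mulr_gt0; [apply: divr_gt0 | exact: expR_gt0].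
exists (K0 * ((c0 / 2)^-1 + (c0 / 2)^-1)); split.
  by apply: mulr_gt0 => //; apply: addr_gt0; rewrite invr_gt0 divr_gt0.
move=> t n l k n2 hl hk.
have n0 : (0 < n)%N by apply: leq_trans n2.
have hsg := @Ln_bound R alpha n l a0 n2 hl.
set s := Num.sqrt (n%:R : R).
have s0 : 0 < s by rewrite sqrtr_gt0 ltr0n.
set sg := sigma_l alpha l.
have sg0 : 0 < sg by exact: sigma_gt0.
have B0 : 0 < B by lra.
have hf : `|f0 l k| <= Rb * sg.
  have := hf0 l k hk; rewrite /sg /sigma_l powRN.
  have P0 : 0 < 2 `^ (l%:R * (2^-1 + alpha)) :> R by apply: powR_gt0.
  by rewrite ler_pdivlMr // mulrC.
have hs : Num.sqrt (ln (2:R)) <= s * sg.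
  rewrite -(ger0_norm (ltW sg0)) -sqrtr_sqr -sqrtrM ?ler0n //.
  by rewrite ler_sqrt //; apply: mulr_ge0; [exact: ler0n | exact: sqr_ge0].
have hI : `|f0 l k| + c0 / s <= B * sg.
  have : c0 / s <= (B - Rb) * sg.
    rewrite ler_pdivrMr // /c0 -mulrA; apply: ler_wpM2l; first lra.
    by rewrite mulrC.
  lra.
have Kt0 : 0 <= expR (t ^+ 2 / 2) * K0 by apply: mulr_ge0; [exact: expR_ge0 | exact: ltW].
apply: le_trans (le_intT _ (fun e => (expR (t ^+ 2 / 2) * K0 * expR (- (c0 / 2) * `|e|))%:E) _ _) _.
- move=> e; rewrite lee_fin.
  by have /andP[h1 _] := @post_bound R alpha B t (f0 l k) e c0 n l B0 n0 c00 hI.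
- move=> e; rewrite lee_fin.
  by have /andP[_ h2] := @post_bound R alpha B t (f0 l k) e c0 n l B0 n0 c00 hI.
under eq_integral do rewrite EFinM.
rewrite ge0_integralZl_EFin //; last by apply/measurable_EFinP; exact: mexpabs.
rewrite [X in (_ * X)%E](_ : _ = ((c0 / 2)^-1 + (c0 / 2)^-1)%:E); last first.
  by apply: int_exp_abs; apply: divr_gt0.
rewrite -EFinM lee_fin le_eqVlt; apply/orP; left; apply/eqP; ring.
Qed.
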